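(* Let $t\ge 0$ and $s\ge 1$ be integers, and let $G$ be a finite incomparability graph such that no $t$-minor of $G$ is isomorphic to the star $K_{1,s}$ (a center adjacent to $s$ pairwise non-adjacent leaves). Then $\hat\beta_t(G)\le s$.
   Context: All graphs are finite and simple. An incomparability graph is a graph whose complement admits a transitive orientation. For an integer $t\ge 0$, a graph $H$ is a $t$-shallow minor ($t$-minor) of a graph $G$ if there are pairwise disjoint sets $V_v\subseteq V(G)$, $v\in V(H)$, each inducing a connected subgraph of $G$ of radius at most $t$, such that $uv\in E(H)$ if and only if some edge of $G$ joins $V_u$ and $V_v$ (i.e. $H$ is obtained by contracting connected subgraphs of radius at most $t$ and deleting vertices, but not edges). For a graph $H$, $\beta(H)$ is the minimum number of cliques partitioning $V(H)$; for $x\in V(H)$, $H_x$ is the subgraph induced by the closed neighborhood $N_H[x]$; $\tilde\beta(H)=\min_{x\in V(H)}\beta(H_x)$; and $\hat\beta_t(G)=\max\{\tilde\beta(H): H \text{ a nonempty } t\text{-minor of } G\}$. *)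

(* Defs.v *)
From mathcomp Require Import all_boot.
Set Implicit Arguments. Unset Strict Implicit. Unset Printing Implicit Defensive.

Definition simple_graph (T : finType) (e : rel T) : Prop :=
  symmetric e /\ irreflexive e.

Definition complement_orientation (T : finType) (e : rel T) (o : rel T) : Prop :=
  [/\ forall x y, o x y -> (x != y) && ~~ e x y,
      forall x y, x != y -> ~~ e x y -> o x y || o y x
    & forall x y, o x y -> ~~ o y x].

Definition incomparability_graph (T : finType) (e : rel T) : Prop :=
  exists o : rel T, complement_orientation e o /\ transitive o.

Definition radius_le (T : finType) (e : rel T) (A : {set T}) (t : nat) : Prop :=
  exists2 c, c \in A &
    forall x, x \in A ->
      exists p : seq T,
        [/\ path e c p, all (fun y => y \in A) p, last c p = x & size p <= t].

Definition tminor (t : nat) (T : finType) (e : rel T) (U : finType) (h : rel U)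
  : Prop :=
  exists V : U -> {set T},
    [/\ forall u v, u != v -> [disjoint V u & V v],
        forall u, radius_le e (V u) t
      & forall u v, u != v ->
          (h u v <-> exists x y, [/\ x \in V u, y \in V v & e x y])].

(* The star K_{1,s}: centre None, leaves Some i. *)
Definition star_rel (s : nat) : rel (option 'I_s) :=
  fun x y => (x == None) != (y == None).

Definition clique_coverb (U : finType) (h : rel U) (A : {set U}) (k : nat) : bool :=
  [exists f : {ffun U -> 'I_k},
     [forall x in A, forall y in A, ((x != y) && (f x == f y)) ==> h x y]].

Lemma clique_cover_exists (U : finType) (h : rel U) (A : {set U}) :
  exists k, clique_coverb h A k.
Proof.
exists #|U|; apply/existsP; exists (finfun (fun x => enum_rank x)).
apply/forall_inP => x _; apply/forall_inP => y _; apply/implyP.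
case/andP=> nxy; rewrite !ffunE => /eqP /enum_rank_inj exy.
by rewrite exy eqxx in nxy.
Qed.

Definition beta (U : finType) (h : rel U) (A : {set U}) : nat :=
  ex_minn (clique_cover_exists h A).

Definition closed_nbhd (U : finType) (h : rel U) (x : U) : {set U} :=
  [set y | (y == x) || h x y].

(* beta~(H) = min_x beta(H_x)  (the default #|U| is never smaller than the
   minimum for nonempty U since beta(H_x) <= #|U|). *)
Definition beta_tilde (U : finType) (h : rel U) : nat :=
  \big[minn/#|U|]_(x : U) beta h (closed_nbhd h x).

(* Main.v *)
Require Import Defs.
From mathcomp Require Import all_boot.
Set Implicit Arguments. Unset Strict Implicit. Unset Printing Implicit Defensive.

Lemma path_const (T : finType) (e : rel T) (A : {set T}) (P : T -> bool) :
  (forall a1 a2, a1 \in A -> a2 \in A -> e a1 a2 -> P a1 = P a2) ->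
  forall p c, c \in A -> path e c p -> all (fun y => y \in A) p -> P (last c p) = P c.
Proof.
move=> HP; elim=> [|y p IH] c cA //= /andP [ecy pp] /andP [yA pA].
by rewrite IH // (HP c y).
Qed.

Lemma radius_const (T : finType) (e : rel T) (A : {set T}) t (P : T -> bool) :
  radius_le e A t ->
  (forall a1 a2, a1 \in A -> a2 \in A -> e a1 a2 -> P a1 = P a2) ->
  forall a1 a2, a1 \in A -> a2 \in A -> P a1 = P a2.
Proof.
case=> c cA Hc HP a1 a2 a1A a2A.
have key a : a \in A -> P a = P c.
  by move=> aA; case: (Hc a aA) => p [pp pA <- _]; apply: (path_const HP).
by rewrite !key.
Qed.

Lemma o_all (T : finType) (e : rel T) (o : rel T) (A B : {set T}) t t' :
  simple_graph e -> complement_orientation e o -> transitive o ->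
  radius_le e A t -> radius_le e B t' -> [disjoint A & B] ->
  (forall x y, x \in A -> y \in B -> ~~ e x y) ->
  forall a b a' b', a \in A -> b \in B -> a' \in A -> b' \in B -> o a b -> o a' b'.
Proof.
move=> [esym eirr] [Ho1 Ho2 Ho3] otr RA RB dAB ne a b a' b' aA bB a'A b'B oab.
have stepA b0 a1 a2 : b0 \in B -> a1 \in A -> a2 \in A -> e a1 a2 -> o a1 b0 -> o a2 b0.
  move=> b0B a1A a2A ea o1.
  have n2 : a2 != b0 by apply/eqP=> E; move: b0B; rewrite -E (disjointFr dAB a2A).
  case/orP: (Ho2 a2 b0 n2 (ne _ _ a2A b0B)) => // ob.
  have := Ho1 _ _ (otr _ _ _ o1 ob); by rewrite ea andbF.
have stepB a0 b1 b2 : a0 \in A -> b1 \in B -> b2 \in B -> e b1 b2 -> o a0 b1 -> o a0 b2.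
  move=> a0A b1B b2B eb o1.
  have n2 : b2 != a0 by apply/eqP=> E; move: b2B; rewrite E (disjointFr dAB a0A).
  have ne' : ~~ e b2 a0 by rewrite esym; apply: ne.
  case/orP: (Ho2 b2 a0 n2 ne') => // ob.
  have := Ho1 _ _ (otr _ _ _ ob o1); by rewrite esym eb andbF.
have h1 : o a' b = o a b.
  apply: (radius_const (P := fun x => o x b) RA) => // a1 a2 a1A a2A ea.
  apply/idP/idP; first exact: stepA.
  by apply: stepA; rewrite // esym.
have h2 : o a' b' = o a' b.
  apply: (radius_const (P := fun y => o a' y) RB) => // b1 b2 b1B b2B eb.
  apply/idP/idP; first exact: stepB.
  by apply: stepB; rewrite // esym.
by rewrite h2 h1.
Qed.

Lemma minor_sub t (T : finType) (e : rel T) (U : finType) (h : rel U)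
  (U' : finType) (r : rel U') (g : U' -> U) :
  tminor t e h -> (forall a b, a != b -> g a != g b) ->
  (forall a b, a != b -> r a b = h (g a) (g b)) -> tminor t e r.
Proof.
case=> V [D R A] inj Hr; exists (fun a => V (g a)); split.
- by move=> a b ab; apply: D; apply: inj.
- by move=> a; apply: R.
by move=> a b ab; rewrite Hr //; apply: A; apply: inj.
Qed.

Lemma bigmin_le (I : eqType) (r : seq I) idx (F : I -> nat) x0 s :
  x0 \in r -> F x0 <= s -> \big[minn/idx]_(i <- r) F i <= s.
Proof.
elim: r => [|x r IH] //=; rewrite inE big_cons => /orP [/eqP -> H|H1 H2].
  exact: leq_trans (geq_minl _ _) H.
exact: leq_trans (geq_minr _ _) (IH H1 H2).
Qed.

Lemma level (U : finType) (Q : rel U) k : forall (S : {set U}),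
  (forall c, sorted Q c -> all (fun y => y \in S) c -> size c <= k) ->
  exists f : U -> nat, (forall y, y \in S -> f y < k) /\
    (forall y z, y \in S -> z \in S -> Q y z -> f y != f z).
Proof.
elim: k => [|k IH] S HS.
  have S0 y : y \in S -> False.
    by move=> yS; have := HS [:: y] erefl; rewrite /= yS => /(_ erefl).
  by exists (fun _ => 0); split=> [y /S0|y z /S0].
pose M := [set y in S | [forall z in S, ~~ Q z y]].
have notM y z : y \in S -> Q y z -> z \notin M.
  move=> yS Qyz; rewrite inE; apply/negP => /andP [_ /forall_inP /(_ y yS)].
  by rewrite Qyz.
have [f [fb fQ]] : exists f : U -> nat, (forall y, y \in S :\: M -> f y < k) /\
    (forall y z, y \in S :\: M -> z \in S :\: M -> Q y z -> f y != f z).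
  apply: IH => [[|y0 c]] // Hs Ha.
  have : y0 \in S :\: M by case/andP: Ha.
  rewrite inE => /andP [y0M y0S]; move: y0M; rewrite inE y0S /=.
  case/forallPn => z; rewrite negb_imply negbK => /andP [zS Qz].
  have Hs' : sorted Q [:: z, y0 & c] by rewrite /= Qz.
  have Ha' : all (fun y => y \in S) [:: z, y0 & c].
    rewrite /= zS y0S /=; apply/allP => w wc.
    by move/allP: Ha => /(_ w); rewrite inE /= wc orbT inE => /(_ isT) /andP [_ ->].
  by have := HS _ Hs' Ha'.
exists (fun y => if y \in M then 0 else (f y).+1); split.
  move=> y yS; case: ifP => // yM; rewrite ltnS fb // inE yM yS //.
move=> y z yS zS Qyz; rewrite (negbTE (notM _ _ yS Qyz)).
case: ifP => // yM; rewrite eqSS fQ // inE ?yM ?yS // (negbTE (notM _ _ yS Qyz)) zS //.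
Qed.

Theorem theorem2p1 (t s : nat) (T : finType) (e : rel T) :
  1 <= s ->
  simple_graph e ->
  incomparability_graph e ->
  ~ tminor t e (@star_rel s) ->
  forall (U : finType) (h : rel U),
    simple_graph h -> 0 < #|U| -> tminor t e h ->
    beta_tilde h <= s.
Proof.
move=> Hs1 He [o [Ho Hotr]] Hnostar U h [hsym hirr] HU Hmin.
have Hmin' := Hmin.
case: Hmin' => V [Vdisj Vrad Vadj].
have [Ho1 Ho2 Ho3] := Ho.
have [esym eirr] := He.
have ctr u : exists2 c, c \in V u & True by case: (Vrad u) => c cV _; exists c.
pose Q : rel U := fun u v => [&& u != v, ~~ h u v &
   [exists a, (a \in V u) && [exists b, (b \in V v) && o a b]]].
have noedge u v : u != v -> ~~ h u v -> forall x y, x \in V u -> y \in V v -> ~~ e x y.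
  move=> uv nh x y xV yV; apply/negP => exy; move/negP: nh; apply.
  by apply/(Vadj u v uv); exists x, y.
have Qall u v : Q u v -> forall a b, a \in V u -> b \in V v -> o a b.
  case/and3P => uv nh /existsP [a0 /andP [a0V /existsP [b0 /andP [b0V oab]]]] a b aV bV.
  exact: (o_all He Ho Hotr (Vrad u) (Vrad v) (Vdisj _ _ uv) (noedge _ _ uv nh) a0V b0V).
have Qtrans u v w : Q u v -> Q v w -> Q u w.
  move=> Quv Qvw.
  have [a aV _] := ctr u; have [b bV _] := ctr v; have [c cV _] := ctr w.
  have uw : u != w.
    apply/eqP => E; subst w.
    have := Ho1 _ _ (Hotr _ _ _ (Qall _ _ Quv a b aV bV) (Qall _ _ Qvw b a bV aV)).
    by rewrite eqxx.
  have nh : ~~ h u w.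
    apply/negP => /(Vadj u w uw) [x [y [xV yV exy]]].
    have := Ho1 _ _ (Hotr _ _ _ (Qall _ _ Quv x b xV bV) (Qall _ _ Qvw b y bV yV)).
    by rewrite exy andbF.
  rewrite /Q uw nh /=; apply/existsP; exists a; rewrite aV /=; apply/existsP; exists c.
  by rewrite cV (Hotr _ _ _ (Qall _ _ Quv a b aV bV) (Qall _ _ Qvw b c bV cV)).
have Qtot u v : u != v -> ~~ h u v -> Q u v || Q v u.
  move=> uv nh.
  have [a aV _] := ctr u; have [b bV _] := ctr v.
  have ab : a != b by apply/eqP => E; move: bV; rewrite -E (disjointFr (Vdisj _ _ uv) aV).
  case/orP: (Ho2 a b ab (noedge _ _ uv nh _ _ aV bV)) => oab; apply/orP.
    left; rewrite /Q uv nh /=; apply/existsP; exists a; rewrite aV /=; apply/existsP.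
    by exists b; rewrite bV.
  right; rewrite /Q eq_sym uv hsym nh /=; apply/existsP; exists b; rewrite bV /=.
  by apply/existsP; exists a; rewrite aV.
have Qnh u v : Q u v -> ~~ h u v by case/and3P.
have Qne u v : Q u v -> u != v by case/and3P.
have Qtr : transitive Q by move=> v u w; apply: Qtrans.
have cover x : clique_coverb h (closed_nbhd h x) s.
  set S := closed_nbhd h x.
  have Hch c : sorted Q c -> all (fun y => y \in S) c -> size c <= s.
    move=> sc aS; rewrite leqNgt; apply/negP => Hsz.
    have pc : pairwise Q c by rewrite -sorted_pairwise.
    have Qij i j : i < size c -> j < size c -> i < j -> Q (nth x c i) (nth x c j).
      by move=> ic jc ij; apply: (pairwiseP x pc).
    have inS i : i < size c -> nth x c i \in S by move=> ic; apply: (all_nthP x aS).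
    have nx i : i < size c -> nth x c i != x.
      move=> ic; apply/eqP => E.
      pose j := if i == 0 then 1 else 0.
      have jc : j < size c by rewrite /j; case: (i == 0); apply: leq_ltn_trans Hsz.
      have ij : i != j by rewrite /j; case: i ic E {j jc} => [|i] //.
      have Qx : ~~ h x (nth x c j).
        case: (ltngtP i j) ij => // [lij|lji] _.
          by rewrite -{1}E; apply: Qnh; apply: Qij.
        by rewrite hsym -{2}E; apply: Qnh; apply: Qij.
      have jx : nth x c j != x.
        case: (ltngtP i j) ij => // [lij|lji] _.
          by rewrite -{2}E eq_sym; apply: Qne; apply: Qij.
        by rewrite -{2}E; apply: Qne; apply: Qij.
      by have := inS j jc; rewrite /S inE (negbTE jx) (negbTE Qx).
    have hx i : i < size c -> h x (nth x c i).
      by move=> ic; have := inS i ic; rewrite /S inE (negbTE (nx i ic)).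
    apply: Hnostar.
    pose g (a : option 'I_s) := if a is Some i then nth x c i else x.
    apply: (minor_sub (g := g) Hmin).
      case=> [i|] [j|] //= ij.
      - have ic : i < size c by apply: ltn_trans Hsz.
        have jc : j < size c by apply: ltn_trans Hsz.
        have ij' : (i : nat) != j by apply: contraNneq ij => /val_inj ->.
        case: (ltngtP i j) ij' => // [lij|lji] _.
          by apply: Qne; apply: Qij.
        by rewrite eq_sym; apply: Qne; apply: Qij.
      - by apply: nx; apply: ltn_trans Hsz.
      - by rewrite eq_sym; apply: nx; apply: ltn_trans Hsz.
    case=> [i|] [j|] //= ij; rewrite /star_rel /=.
    - have ic : i < size c by apply: ltn_trans Hsz.
      have jc : j < size c by apply: ltn_trans Hsz.
      have ij' : (i : nat) != j by apply: contraNneq ij => /val_inj ->.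
      case: (ltngtP i j) ij' => // [lij|lji] _.
        by rewrite (negbTE (Qnh _ _ (Qij _ _ ic jc lij))).
      by rewrite hsym (negbTE (Qnh _ _ (Qij _ _ jc ic lji))).
    - by rewrite hsym hx //; apply: ltn_trans Hsz.
    - by rewrite hx //; apply: ltn_trans Hsz.
  have [f [fb fQ]] := level Hch.
  case: s Hs1 Hnostar fb Hch => [//|s'] _ _ fb _.
  apply/existsP; exists [ffun y => inord (f y) : 'I_s'.+1].
  apply/forall_inP => y yS; apply/forall_inP => z zS; apply/implyP => /andP [yz].
  rewrite !ffunE => /eqP E.
  have fyz : f y = f z.
    by rewrite -(inordK (fb y yS)) -(inordK (fb z zS)) E.
  case hyz: (h y z) => //.
  case/orP: (Qtot y z yz (negbT hyz)) => Qq.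
    by have := fQ y z yS zS Qq; rewrite fyz eqxx.
  by have := fQ z y zS yS Qq; rewrite fyz eqxx.
case/card_gt0P: HU => x0 _.
apply: (@bigmin_le U (index_enum U) #|U| _ x0); first exact: mem_index_enum.
rewrite /beta; case: ex_minnP => m _ Hm; exact: Hm.
Qed.
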